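(* Let $t_0<t_1<+\infty$ and let $a_{jk}(t),\ c_{jk}(t)$ ($j,k=1,2$) be complex-valued continuous functions on $[t_0;t_1)$ with $c_{11},c_{22}$ real-valued and $c_{21}=\overline{c}_{12}$, and let $b_1(t),b_2(t)$ be real-valued continuous functions with $b_j(t)>0$, $t\in[t_0;t_1)$, $j=1,2$. Assume that the functions $a_{12}(t)/b_1(t)$ and $\overline{a}_{21}(t)/b_2(t)$ are continuously differentiable on $[t_0;t_1)$. Let $z_{11}(t),z_{22}(t)$ be real-valued and $y(t),v(t)$ complex-valued continuously differentiable functions on $[t_0;t_1)$ satisfying, for $t\in[t_0;t_1)$, the system $$z_{11}'+b_1z_{11}^2+2(\mathrm{Re}\,a_{11})z_{11}+b_2|y|^2-\frac{|a_{21}|^2}{b_2}-c_{11}=0,$$ $$y'+\bigl[b_1z_{11}+b_2z_{22}+\overline{a}_{11}+a_{22}\bigr]y+\Bigl(a_{12}-\frac{b_1}{b_2}\overline{a}_{21}\Bigr)z_{11}-\Bigl(\frac{\overline{a}_{21}}{b_2}\Bigr)'-\frac{\overline{a}_{21}}{b_2}\bigl(\overline{a}_{11}+a_{22}\bigr)-c_{12}=0,$$ and the system $$z_{22}'+b_2z_{22}^2+2(\mathrm{Re}\,a_{22})z_{22}+b_1|v|^2-\frac{|a_{12}|^2}{b_1}-c_{22}=0,$$ $$v'+\bigl[b_1z_{11}+b_2z_{22}+\overline{a}_{11}+a_{22}\bigr]v+\Bigl(\overline{a}_{21}-\frac{b_2}{b_1}a_{12}\Bigr)z_{22}-\Bigl(\frac{a_{12}}{b_1}\Bigr)'-\frac{a_{12}}{b_1}\bigl(\overline{a}_{11}+a_{22}\bigr)-c_{12}=0,$$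 (all coefficients evaluated at $t$), and such that $z_{jj}(t)\ge0$ for $t\in[t_0;t_1)$, $j=1,2$, and $y(t_0)=v(t_0)=0$. Then for all $t\in[t_0;t_1)$ $$|y(t)|\le\mathfrak{M}(t)+\int_{t_0}^{t}\biggl|\exp\Bigl\{-\int_\tau^t\bigl(\overline{a}_{11}(s)+a_{22}(s)\bigr)ds\Bigr\}\Bigl[\Bigl(\frac{\overline{a}_{21}}{b_2}\Bigr)'(\tau)+\frac{\overline{a}_{21}(\tau)}{b_2(\tau)}\bigl(\overline{a}_{11}(\tau)+a_{22}(\tau)\bigr)+c_{12}(\tau)\Bigr]\biggr|d\tau,$$ $$|v(t)|\le\mathfrak{M}(t)+\int_{t_0}^{t}\biggl|\exp\Bigl\{-\int_\tau^t\bigl(\overline{a}_{11}(s)+a_{22}(s)\bigr)ds\Bigr\}\Bigl[\Bigl(\frac{a_{12}}{b_1}\Bigr)'(\tau)+\frac{a_{12}(\tau)}{b_1(\tau)}\bigl(\overline{a}_{11}(\tau)+a_{22}(\tau)\bigr)+c_{12}(\tau)\Bigr]\biggr|d\tau,$$ where $$\mathfrak{M}(t)=\max_{\tau\in[t_0;t]}\biggl|\exp\Bigl\{-\int_\tau^t\bigl(\overline{a}_{11}(s)+a_{22}(s)\bigr)ds\Bigr\}\Bigl(\frac{a_{12}(\tau)}{b_1(\tau)}-\frac{\overline{a}_{21}(\tau)}{b_2(\tau)}\Bigr)\biggr|.$$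
   Context: Overline denotes complex conjugation; $\mathrm{Re}$ denotes the real part. *)

(* Defs.v *)
From Stdlib Require Import Reals.
From Coquelicot Require Import Coquelicot.

Definition cexp (z : C) : C := (exp (Re z) * cos (Im z), exp (Re z) * sin (Im z))%R.

Definition CRInt (f : R -> C) (a b : R) : C := RInt (V := C_R_CompleteNormedModule) f a b.

Definition cont_on {V : UniformSpace} (f : R -> V) (t0 t1 : R) : Prop :=
  forall t, t0 <= t < t1 ->
    filterlim f (within (fun s => t0 <= s) (locally t)) (locally (f t)).

Definition deriv_on {V : NormedModule R_AbsRing} (f f' : R -> V) (t0 t1 : R) : Prop :=
  forall t, t0 <= t < t1 ->
    filterlim (fun s => scal (/ (s - t)) (minus (f s) (f t)))
      (within (fun s => t0 <= s /\ s <> t) (locally t)) (locally (f' t)).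

Definition C1_on {V : NormedModule R_AbsRing} (f f' : R -> V) (t0 t1 : R) : Prop :=
  cont_on f t0 t1 /\ deriv_on f f' t0 t1 /\ cont_on f' t0 t1.

Definition is_max_on (g : R -> R) (a b M : R) : Prop :=
  (exists tau, a <= tau <= b /\ g tau = M) /\ (forall tau, a <= tau <= b -> g tau <= M).

(* Main.v *)
Require Import Defs.
From Stdlib Require Import Reals Lra.
From Coquelicot Require Import Coquelicot.

Section Flim.
Context {T : Type} {F : (T -> Prop) -> Prop} {FF : Filter F}.

Lemma flimR_plus (f g : T -> R) a b :
  filterlim f F (locally a) -> filterlim g F (locally b) ->
  filterlim (fun s => f s + g s) F (locally (a + b)).
Proof.
  intros Hf Hg. eapply filterlim_comp_2; eauto.
  apply (filterlim_plus (K:=R_AbsRing) (V:=R_NormedModule) a b).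
Qed.

Lemma flimR_mult (f g : T -> R) a b :
  filterlim f F (locally a) -> filterlim g F (locally b) ->
  filterlim (fun s => f s * g s) F (locally (a * b)).
Proof.
  intros Hf Hg. eapply filterlim_comp_2; eauto.
  apply (filterlim_mult (K:=R_AbsRing) a b).
Qed.

Lemma flimR_opp (f : T -> R) a :
  filterlim f F (locally a) -> filterlim (fun s => - f s) F (locally (- a)).
Proof.
  intros Hf. eapply filterlim_comp; eauto.
  apply (filterlim_opp (K:=R_AbsRing) (V:=R_NormedModule) a).
Qed.

Lemma flimR_minus (f g : T -> R) a b :
  filterlim f F (locally a) -> filterlim g F (locally b) ->
  filterlim (fun s => f s - g s) F (locally (a - b)).
Proof.
  intros Hf Hg. apply flimR_plus; auto. apply flimR_opp; auto.
Qed.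

Lemma flimR_const (a : R) : filterlim (fun _ : T => a) F (locally a).
Proof. apply filterlim_const. Qed.

Lemma flimR_cont (h : R -> R) (f : T -> R) a :
  continuous h a -> filterlim f F (locally a) ->
  filterlim (fun s => h (f s)) F (locally (h a)).
Proof. intros Hh Hf. eapply filterlim_comp; eauto. Qed.

Lemma flimR_inv (f : T -> R) a :
  a <> 0 -> filterlim f F (locally a) -> filterlim (fun s => / f s) F (locally (/ a)).
Proof.
  intros Ha Hf. apply (flimR_cont (fun x => / x)); auto.
  apply (continuous_Rinv_comp (fun x => x)); auto. apply continuous_id.
Qed.

Lemma flimC_intro (f : T -> C) (l : C) :
  filterlim (fun s => fst (f s)) F (locally (fst l)) ->
  filterlim (fun s => snd (f s)) F (locally (snd l)) ->
  filterlim f F (@locally C_R_NormedModule l).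
Proof.
  intros H1 H2 P [eps HP].
  specialize (H1 _ (locally_ball (fst l) eps)).
  specialize (H2 _ (locally_ball (snd l) eps)).
  unfold filtermap in *.
  generalize (filter_and _ _ H1 H2). apply filter_imp.
  intros s [Hs1 Hs2]. apply HP. split; assumption.
Qed.

Lemma flimC_fst (f : T -> C) (l : C) :
  filterlim f F (@locally C_R_NormedModule l) ->
  filterlim (fun s => fst (f s)) F (locally (fst l)).
Proof.
  intros H P [eps HP].
  specialize (H _ (@locally_ball C_R_NormedModule l eps)).
  unfold filtermap in *. revert H. apply filter_imp.
  intros s [Hs1 Hs2]. apply HP. assumption.
Qed.

Lemma flimC_snd (f : T -> C) (l : C) :
  filterlim f F (@locally C_R_NormedModule l) ->
  filterlim (fun s => snd (f s)) F (locally (snd l)).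
Proof.
  intros H P [eps HP].
  specialize (H _ (@locally_ball C_R_NormedModule l eps)).
  unfold filtermap in *. revert H. apply filter_imp.
  intros s [Hs1 Hs2]. apply HP. assumption.
Qed.

End Flim.


Section FlimC.
Context {T : Type} {F : (T -> Prop) -> Prop} {FF : Filter F}.

Ltac fl := repeat first
  [ apply flimR_plus | apply flimR_minus | apply flimR_mult | apply flimR_opp
  | apply flimR_const | apply flimC_fst | apply flimC_snd ]; try assumption.

Lemma flimC_mult (f g : T -> C) a b :
  filterlim f F (@locally C_R_NormedModule a) -> filterlim g F (@locally C_R_NormedModule b) ->
  filterlim (fun s => (f s * g s)%C) F (@locally C_R_NormedModule (a * b)%C).
Proof. intros. apply flimC_intro; unfold Cmult; simpl; fl. Qed.

Lemma flimC_plus (f g : T -> C) a b :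
  filterlim f F (@locally C_R_NormedModule a) -> filterlim g F (@locally C_R_NormedModule b) ->
  filterlim (fun s => (f s + g s)%C) F (@locally C_R_NormedModule (a + b)%C).
Proof. intros. apply flimC_intro; unfold Cplus; simpl; fl. Qed.

Lemma flimC_opp (f : T -> C) a :
  filterlim f F (@locally C_R_NormedModule a) ->
  filterlim (fun s => (- f s)%C) F (@locally C_R_NormedModule (- a)%C).
Proof. intros. apply flimC_intro; unfold Copp; simpl; fl. Qed.

Lemma flimC_conj (f : T -> C) a :
  filterlim f F (@locally C_R_NormedModule a) ->
  filterlim (fun s => Cconj (f s)) F (@locally C_R_NormedModule (Cconj a)).
Proof. intros. apply flimC_intro; unfold Cconj; simpl; fl. Qed.

Lemma flimC_RtoC (f : T -> R) a :
  filterlim f F (locally a) ->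
  filterlim (fun s => RtoC (f s)) F (@locally C_R_NormedModule (RtoC a)).
Proof. intros. apply flimC_intro; unfold RtoC; simpl; fl. Qed.

Lemma flimC_const (a : C) :
  filterlim (fun _ : T => a) F (@locally C_R_NormedModule a).
Proof. apply filterlim_const. Qed.

Lemma flimC_cexp (f : T -> C) a :
  filterlim f F (@locally C_R_NormedModule a) ->
  filterlim (fun s => cexp (f s)) F (@locally C_R_NormedModule (cexp a)).
Proof.
  intros. apply flimC_intro; unfold cexp; simpl; apply flimR_mult;
  (apply flimR_cont; [first [apply continuous_exp | apply continuous_cos | apply continuous_sin] | fl]).
Qed.

Lemma flimC_Cmod (f : T -> C) a :
  filterlim f F (@locally C_R_NormedModule a) ->
  filterlim (fun s => Cmod (f s)) F (locally (Cmod a)).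
Proof.
  intros. unfold Cmod. apply flimR_cont. apply continuous_sqrt.
  simpl. fl.
Qed.

Lemma flimC_divR (f : T -> C) (g : T -> R) a b :
  b <> 0 ->
  filterlim f F (@locally C_R_NormedModule a) -> filterlim g F (locally b) ->
  filterlim (fun s => (f s / RtoC (g s))%C) F (@locally C_R_NormedModule (a / RtoC b)%C).
Proof.
  intros Hb Hf Hg.
  assert (E : forall (z : C) (r : R), (z / RtoC r)%C = (z * RtoC (/ r))%C).
  { intros [x y] r. unfold Cdiv, Cmult, Cinv, RtoC. simpl.
    destruct (Req_dec r 0) as [->|Hr].
    - rewrite Rinv_0. f_equal; unfold Rdiv; rewrite ?Rmult_0_l, ?Rmult_0_r; ring.
    - f_equal; field; auto. }
  rewrite E. apply (filterlim_ext (fun s => (f s * RtoC (/ g s))%C)).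
  { intros s. rewrite E. reflexivity. }
  apply flimC_mult; auto. apply flimC_RtoC. apply flimR_inv; auto.
Qed.
End FlimC.


Lemma ballR (x y e : R) : ball x e y <-> Rabs (y - x) < e.
Proof. unfold ball; simpl; unfold AbsRing_ball, abs, minus, plus, opp; simpl. tauto. Qed.

Lemma Rmax_lip (x s t0 : R) : Rabs (Rmax x t0 - Rmax s t0) <= Rabs (x - s).
Proof.
  unfold Rmax. destruct (Rle_dec x t0); destruct (Rle_dec s t0);
  unfold Rabs; repeat destruct Rcase_abs; lra.
Qed.

Lemma Rmax_within (s t0 : R) :
  filterlim (fun x => Rmax x t0) (locally s) (within (fun u => t0 <= u) (locally (Rmax s t0))).
Proof.
  intros P [eps HP]. exists eps. intros x Hx. apply HP.
  - apply ballR. apply ballR in Hx. eapply Rle_lt_trans. apply Rmax_lip. auto.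
  - apply Rmax_r.
Qed.

Lemma cont_max {V : UniformSpace} (f : R -> V) t0 t1 :
  t0 < t1 -> cont_on f t0 t1 -> forall s, s < t1 -> continuous (fun x => f (Rmax x t0)) s.
Proof.
  intros Ht H s Hs. unfold continuous.
  eapply filterlim_comp. apply Rmax_within.
  apply H. split. apply Rmax_r. unfold Rmax; destruct Rle_dec; lra.
Qed.


Lemma Cderive_fst (f : R -> C) x l :
  @is_derive R_AbsRing C_R_NormedModule f x l ->
  is_derive (fun s => fst (f s)) x (fst l).
Proof.
  intros H.
  unfold is_derive in *.
  eapply filterdiff_ext_lin.
  apply (filterdiff_comp' f (fun t : prod_NormedModule R_AbsRing R_NormedModule R_NormedModule => fst t) x _ (fun t => fst t) H).
  apply filterdiff_linear, is_linear_fst.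
  intros y; simpl. reflexivity.
Qed.

Lemma Cderive_snd (f : R -> C) x l :
  @is_derive R_AbsRing C_R_NormedModule f x l ->
  is_derive (fun s => snd (f s)) x (snd l).
Proof.
  intros H.
  unfold is_derive in *.
  eapply filterdiff_ext_lin.
  apply (filterdiff_comp' f (fun t : prod_NormedModule R_AbsRing R_NormedModule R_NormedModule => snd t) x _ (fun t => snd t) H).
  apply filterdiff_linear, is_linear_snd.
  intros y; simpl. reflexivity.
Qed.

Lemma Cderive_pair (f : R -> C) x l :
  is_derive (fun s => fst (f s)) x (fst l) ->
  is_derive (fun s => snd (f s)) x (snd l) ->
  @is_derive R_AbsRing C_R_NormedModule f x l.
Proof.
  intros H1 H2.
  unfold is_derive in *.
  eapply filterdiff_ext.
  2: eapply filterdiff_ext_lin.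
  2: apply (filterdiff_comp_2 (fun s => fst (f s)) (fun s => snd (f s))
     (fun a b => (a, b) : C_R_NormedModule) _ _ (fun a b => (a,b)) H1 H2).
  - intros y; simpl. destruct (f y); reflexivity.
  - apply filterdiff_linear. split.
    + intros [a b] [c d]; reflexivity.
    + intros k [a b]; reflexivity.
    + exists 1. split. lra. intros [a b]. rewrite Rmult_1_l. apply Rle_refl.
  - intros y. destruct l; reflexivity.
Qed.

Lemma is_derive_eqv (f : R -> R) x l l' : is_derive f x l -> l = l' -> is_derive f x l'.
Proof. intros H ->; exact H. Qed.

Lemma dR_plus (f g : R -> R) x a b : is_derive f x a -> is_derive g x b ->
  is_derive (fun s => f s + g s) x (a + b).
Proof. intros. apply (is_derive_plus f g x a b); auto. Qed.
Lemma dR_minus (f g : R -> R) x a b : is_derive f x a -> is_derive g x b ->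
  is_derive (fun s => f s - g s) x (a - b).
Proof. intros. apply (is_derive_minus f g x a b); auto. Qed.
Lemma dR_mult (f g : R -> R) x a b : is_derive f x a -> is_derive g x b ->
  is_derive (fun s => f s * g s) x (a * g x + f x * b).
Proof. intros. apply Derive.is_derive_mult; auto. Qed.
Lemma dR_exp (f : R -> R) x a : is_derive f x a ->
  is_derive (fun s => exp (f s)) x (a * exp (f x)).
Proof. intros. apply (is_derive_comp exp f x); auto. apply is_derive_exp. Qed.
Lemma dR_cos (f : R -> R) x a : is_derive f x a ->
  is_derive (fun s => cos (f s)) x (a * - sin (f x)).
Proof. intros. apply (is_derive_comp cos f x); auto. apply is_derive_cos. Qed.
Lemma dR_sin (f : R -> R) x a : is_derive f x a ->
  is_derive (fun s => sin (f s)) x (a * cos (f x)).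
Proof. intros. apply (is_derive_comp sin f x); auto. apply is_derive_sin. Qed.

Lemma dR_const (c x : R) : is_derive (fun _ => c) x 0.
Proof. exact (is_derive_const (K:=R_AbsRing) (V:=R_NormedModule) c x). Qed.

Definition CD (f : R -> C) x (l : C) := @is_derive R_AbsRing C_R_NormedModule f x l.

Lemma CD_mult (f g : R -> C) x a b : CD f x a -> CD g x b ->
  CD (fun s => (f s * g s)%C) x (a * g x + f x * b)%C.
Proof.
  intros Hf Hg. 
  pose proof (Cderive_fst _ _ _ Hf) as F1.
  pose proof (Cderive_snd _ _ _ Hf) as F2.
  pose proof (Cderive_fst _ _ _ Hg) as G1.
  pose proof (Cderive_snd _ _ _ Hg) as G2.
  apply Cderive_pair.
  - apply is_derive_ext with (f := fun s => fst (f s) * fst (g s) - snd (f s) * snd (g s)).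
    { intros; reflexivity. }
    eapply is_derive_eqv. apply dR_minus; apply dR_mult; eassumption.
    simpl. ring.
  - apply is_derive_ext with (f := fun s => fst (f s) * snd (g s) + snd (f s) * fst (g s)).
    { intros; reflexivity. }
    eapply is_derive_eqv. apply dR_plus; apply dR_mult; eassumption.
    simpl. ring.
Qed.

Lemma CD_cexp (f : R -> C) x a : CD f x a ->
  CD (fun s => cexp (f s)) x (a * cexp (f x))%C.
Proof.
  intros Hf.
  pose proof (Cderive_fst _ _ _ Hf) as F1.
  pose proof (Cderive_snd _ _ _ Hf) as F2.
  apply Cderive_pair.
  - apply is_derive_ext with (f := fun s => exp (fst (f s)) * cos (snd (f s))).
    { intros; reflexivity. }
    eapply is_derive_eqv. apply dR_mult. apply dR_exp. exact F1.
    apply dR_cos. exact F2.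
    unfold cexp, Cmult, Re, Im; simpl; ring.
  - apply is_derive_ext with (f := fun s => exp (fst (f s)) * sin (snd (f s))).
    { intros; reflexivity. }
    eapply is_derive_eqv. apply dR_mult. apply dR_exp. exact F1.
    apply dR_sin. exact F2.
    unfold cexp, Cmult, Re, Im; simpl; ring.
Qed.

Lemma CD_RtoC (f : R -> R) x a : is_derive f x a -> CD (fun s => RtoC (f s)) x (RtoC a).
Proof.
  intros Hf. apply Cderive_pair; simpl. exact Hf. apply dR_const.
Qed.

Lemma CD_const (c : C) x : CD (fun _ => c) x (RtoC 0).
Proof. apply Cderive_pair; simpl; apply dR_const. Qed.

Lemma CD_opp (f : R -> C) x a : CD f x a -> CD (fun s => (- f s)%C) x (- a)%C.
Proof.
  intros Hf. apply Cderive_pair; simpl.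
  apply (is_derive_opp (fun s => fst (f s))). apply (Cderive_fst _ _ _ Hf).
  apply (is_derive_opp (fun s => snd (f s))). apply (Cderive_snd _ _ _ Hf).
Qed.

Lemma deriv_within_real (f : R -> R) l c t0 : t0 < c ->
  filterlim (fun s => / (s - c) * (f s - f c))
    (within (fun s => t0 <= s /\ s <> c) (locally c)) (locally l) ->
  is_derive (fun s => f (Rmax s t0)) c l.
Proof.
  intros Hc H. apply is_derive_Reals. intros eps Heps.
  destruct (H _ (locally_ball l (mkposreal eps Heps))) as [d Hd].
  assert (Hp : 0 < Rmin d (c - t0)). { apply Rmin_pos. apply cond_pos. lra. }
  exists (mkposreal _ Hp). intros h Hh0 Hh. simpl in Hh.
  assert (Hh1 : Rabs h < d) by (eapply Rlt_le_trans; [exact Hh| apply Rmin_l]).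
  assert (Hh2 : Rabs h < c - t0) by (eapply Rlt_le_trans; [exact Hh| apply Rmin_r]).
  assert (Hb : ball c d (c + h)). { apply ballR. replace (c + h - c) with h by ring. auto. }
  specialize (Hd _ Hb). simpl in Hd.
  assert (Hd' : ball l eps (/ (c + h - c) * (f (c + h) - f c))).
  { apply Hd. split. unfold Rabs in Hh2; destruct Rcase_abs; lra. intros E. apply Hh0. lra. }
  apply ballR in Hd'.
  rewrite (Rmax_left (c+h) t0) by (unfold Rabs in Hh2; destruct Rcase_abs; lra).
  rewrite (Rmax_left c t0) by lra.
  replace ((f (c + h) - f c) / h) with (/ (c + h - c) * (f (c + h) - f c)).
  exact Hd'. replace (c + h - c) with h by ring. unfold Rdiv. ring.
Qed.

Lemma deriv_interior (y y' : R -> C) t0 t1 c :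
  deriv_on (V := C_R_NormedModule) y y' t0 t1 -> t0 < c < t1 ->
  CD (fun s => y (Rmax s t0)) c (y' c).
Proof.
  intros H Hc. specialize (H c ltac:(lra)).
  apply Cderive_pair.
  - apply (deriv_within_real (fun s => fst (y s))). lra.
    eapply filterlim_ext. 2: apply (flimC_fst _ _ H). intros s. simpl. reflexivity.
  - apply (deriv_within_real (fun s => snd (y s))). lra.
    eapply filterlim_ext. 2: apply (flimC_snd _ _ H). intros s. simpl. reflexivity.
Qed.


Lemma loc_lt (x t1 : R) : x < t1 -> locally x (fun a => a < t1).
Proof. intros H. apply (open_lt t1 x H). Qed.

Lemma CRInt_derive (Af : R -> C) t t1 x :
  (forall s, s < t1 -> continuous (T := R_UniformSpace) (U := C_R_NormedModule) Af s) ->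
  t < t1 -> x < t1 ->
  CD (fun s => CRInt Af s t) x (- Af x)%C.
Proof.
  intros Hc Ht Hx.
  assert (H := is_derive_RInt' (V := C_R_NormedModule) Af (fun s => CRInt Af s t) x t).
  unfold CD.
  replace ((- Af x)%C) with (opp (G:=C_R_NormedModule) (Af x)).
  2: { destruct (Af x); reflexivity. }
  apply H. 2: apply Hc; auto.
  generalize (loc_lt x t1 Hx). apply filter_imp. intros a Ha.
  apply (RInt_correct (V := C_R_CompleteNormedModule)).
  apply (ex_RInt_continuous (V := C_R_CompleteNormedModule)).
  intros z Hz. apply Hc. 
  assert (Rmax a t < t1) by (unfold Rmax; destruct Rle_dec; lra). lra.
Qed.

Lemma RRInt_derive (Pf : R -> R) t t1 x :
  (forall s, s < t1 -> continuous Pf s) ->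
  t < t1 -> x < t1 ->
  is_derive (fun s => RInt Pf s t) x (- Pf x).
Proof.
  intros Hc Ht Hx.
  apply (is_derive_RInt' (V := R_NormedModule) Pf (fun s => RInt Pf s t) x t).
  2: apply Hc; auto.
  generalize (loc_lt x t1 Hx). apply filter_imp. intros a Ha.
  apply (RInt_correct (V := R_CompleteNormedModule)).
  apply (ex_RInt_continuous (V := R_CompleteNormedModule)).
  intros z Hz. apply Hc. 
  assert (Rmax a t < t1) by (unfold Rmax; destruct Rle_dec; lra). lra.
Qed.

Lemma RRInt_derive_up (Kf : R -> R) t0 t1 x :
  (forall s, s < t1 -> continuous Kf s) ->
  t0 < t1 -> x < t1 ->
  is_derive (fun s => RInt Kf t0 s) x (Kf x).
Proof.
  intros Hc Ht Hx.
  apply (is_derive_RInt (V := R_NormedModule) Kf (fun s => RInt Kf t0 s) t0 x).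
  2: apply Hc; auto.
  generalize (loc_lt x t1 Hx). apply filter_imp. intros a Ha.
  apply (RInt_correct (V := R_CompleteNormedModule)).
  apply (ex_RInt_continuous (V := R_CompleteNormedModule)).
  intros z Hz. apply Hc. 
  assert (Rmax t0 a < t1) by (unfold Rmax; destruct Rle_dec; lra). lra.
Qed.


Lemma fst_le_Cmod (z : C) : fst z <= Cmod z.
Proof. pose proof (re_le_Cmod z). unfold Re in H. unfold Rabs in H; destruct Rcase_abs; lra. Qed.

Lemma nfst_le_Cmod (z : C) : - fst z <= Cmod z.
Proof. pose proof (re_le_Cmod z). unfold Re in H. unfold Rabs in H; destruct Rcase_abs; lra. Qed.

Lemma alg1 (u E w g : C) (e q : R) :
  fst (u * (RtoC e * E * (- RtoC q * w + g)))%C = e * (- q * fst (u * (E * w))%C + fst (u * (E * g))%C).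
Proof.
  destruct u as [u1 u2], E as [e1 e2], w as [w1 w2], g as [g1 g2].
  unfold Cmult, Cplus, Copp, RtoC; simpl. ring.
Qed.

Lemma IA_eq (A : R -> C) t0 x t : t0 <= x <= t ->
  CRInt (fun s => A (Rmax s t0)) x t = CRInt A x t.
Proof.
  intros H. unfold CRInt. apply (RInt_ext (V:=C_R_CompleteNormedModule)). intros z Hz.
  rewrite Rmin_left in Hz by lra. rewrite Rmax_right in Hz by lra.
  rewrite Rmax_left by lra. reflexivity.
Qed.

Lemma core (t0 t1 t M : R) (A : R -> C) (P q : R -> R) (w g y y' : R -> C) :
  t0 < t1 -> t0 <= t < t1 ->
  cont_on (V:=C_R_NormedModule) A t0 t1 ->
  cont_on (V:=R_NormedModule) P t0 t1 ->
  cont_on (V:=C_R_NormedModule) g t0 t1 ->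
  cont_on (V:=C_R_NormedModule) y t0 t1 ->
  deriv_on (V:=C_R_NormedModule) y y' t0 t1 ->
  (forall s, t0 <= s < t1 -> 0 <= q s <= P s) ->
  (forall s, t0 <= s < t1 -> (y' s + (RtoC (P s) + A s) * y s = - RtoC (q s) * w s + g s)%C) ->
  y t0 = RtoC 0 ->
  (forall tau, t0 <= tau <= t -> Cmod (cexp (- CRInt A tau t) * w tau) <= M) ->
  0 <= M ->
  Cmod (y t) <= M + RInt (fun tau => Cmod (cexp (- CRInt A tau t) * g tau)) t0 t.
Proof.
  intros H01 Ht cA cP cg cy dy Hq Hode Hy0 HM HM0.
  set (At := fun s => A (Rmax s t0)).
  set (Pt := fun s => P (Rmax s t0)).
  set (gt := fun s => g (Rmax s t0)).
  set (yt := fun s => y (Rmax s t0)).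
  assert (cAt : forall s, s < t1 -> continuous (T:=R_UniformSpace) (U:=C_R_NormedModule) At s)
    by (apply cont_max; auto).
  assert (cPt : forall s, s < t1 -> continuous Pt s) by (apply cont_max; auto).
  assert (cgt : forall s, s < t1 -> continuous (T:=R_UniformSpace) (U:=C_R_NormedModule) gt s)
    by (apply cont_max; auto).
  assert (cyt : forall s, s < t1 -> continuous (T:=R_UniformSpace) (U:=C_R_NormedModule) yt s)
    by (apply cont_max; auto).
  assert (Pt0 : forall s, s < t1 -> 0 <= Pt s).
  { intros s Hs. unfold Pt. assert (t0 <= Rmax s t0 < t1).
    { split. apply Rmax_r. unfold Rmax; destruct Rle_dec; lra. }
    specialize (Hq _ H). lra. }
  set (IA := fun s => CRInt At s t).
  set (p := fun s => RInt Pt s t).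
  assert (dIA : forall x, x < t1 -> CD IA x (- At x)%C).
  { intros x Hx. apply CRInt_derive with t1; auto; lra. }
  assert (dp : forall x, x < t1 -> is_derive p x (- Pt x)).
  { intros x Hx. apply RRInt_derive with t1; auto; lra. }
  assert (cIA : forall x, x < t1 -> continuous (T:=R_UniformSpace) (U:=C_R_NormedModule) IA x).
  { intros x Hx. apply (ex_derive_continuous (V:=C_R_NormedModule)). eexists. apply dIA; auto. }
  assert (cp : forall x, x < t1 -> continuous p x).
  { intros x Hx. apply (ex_derive_continuous (V:=R_NormedModule)). eexists. apply dp; auto. }
  set (E := fun s => cexp (- IA s)).
  assert (cE : forall x, x < t1 -> continuous (T:=R_UniformSpace) (U:=C_R_NormedModule) E x).
  { intros x Hx. apply flimC_cexp, flimC_opp, cIA; auto. }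
  set (K := fun s => Cmod (E s * gt s)).
  assert (cK : forall x, x < t1 -> continuous K x).
  { intros x Hx. apply flimC_Cmod, flimC_mult; [apply cE | apply cgt]; lra. }
  set (G := fun s => M * exp (- p s) + RInt K t0 s).
  assert (dG : forall x, x < t1 -> is_derive G x (0 * exp (- p x) + M * ((- - Pt x) * exp (- p x)) + K x)).
  { intros x Hx. unfold G. apply (dR_plus (fun s => M * exp (- p s)) (fun s => RInt K t0 s)).
    apply (dR_mult (fun _ => M) (fun s => exp (- p s))). apply dR_const. apply (dR_exp (fun s => - p s)).
    apply (is_derive_opp (K:=R_AbsRing) (V:=R_NormedModule) p). apply dp; auto.
    apply RRInt_derive_up with t1; [exact cK | lra | lra]. }
  set (u := Cconj (y t)).
  set (h := fun s => (RtoC (exp (- p s)) * E s * yt s)%C).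
  set (psi := fun s => fst (u * h s)%C - Cmod u * G s).
  assert (cpsi : forall x, x < t1 -> continuity_pt psi x).
  { intros x Hx. apply continuity_pt_filterlim. unfold psi.
    apply flimR_minus. apply flimC_fst. apply flimC_mult. apply flimC_const.
    unfold h. apply flimC_mult. apply flimC_mult. apply flimC_RtoC.
    apply (flimR_cont exp (fun s => - p s)). apply continuous_exp. apply flimR_opp. apply cp; lra.
    apply cE; lra. apply cyt; lra.
    apply flimR_mult. apply flimR_const.
    apply (ex_derive_continuous (V:=R_NormedModule)). eexists. apply dG; lra. }
  assert (dpsi : forall x, t0 < x < t -> exists D, is_derive psi x D /\ D <= 0).
  { intros x Hx.
    assert (dh : CD h x (((RtoC ((- - Pt x) * exp (- p x))) * E x
        + RtoC (exp (- p x)) * ((- - At x) * cexp (- IA x))) * yt x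
        + (RtoC (exp (- p x)) * E x) * y' x)%C).
    { unfold h. apply (CD_mult (fun s => RtoC (exp (- p s)) * E s)%C yt).
      apply (CD_mult (fun s => RtoC (exp (- p s))) E). apply CD_RtoC.
      apply (dR_exp (fun s => - p s)).
      apply (is_derive_opp (K:=R_AbsRing) (V:=R_NormedModule) p). apply dp; lra.
      unfold E. apply (CD_cexp (fun s => - IA s)%C). apply CD_opp. apply dIA; lra.
      unfold yt. apply deriv_interior with t1; auto; lra. }
    eexists; split.
    { unfold psi. apply (dR_minus (fun s => fst (u * h s)%C) (fun s => Cmod u * G s)).
      apply (Cderive_fst (fun s => (u * h s)%C)). apply (CD_mult (fun _ => u) h).
      apply CD_const. exact dh.
      apply (dR_mult (fun _ => Cmod u) G). apply dR_const. apply dG; lra. }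
    assert (Em : Rmax x t0 = x) by (apply Rmax_left; lra).
    unfold At, Pt, yt. rewrite !Em. fold (E x).
    set (e := exp (- p x)).
    rewrite !Ropp_involutive.
    match goal with |- fst ?z - _ <= 0 =>
      replace z with (u * (RtoC e * E x * (y' x + (RtoC (P x) + A x) * y x)))%C
        by (rewrite RtoC_mult; ring) end.
    rewrite Hode by lra. rewrite alg1.
    assert (Hqx : 0 <= q x <= P x) by (apply Hq; lra).
    assert (Hp0 : 0 <= p x).
    { unfold p. apply RInt_ge_0. lra.
      apply (ex_RInt_continuous (V:=R_CompleteNormedModule)). intros z Hz. apply cPt.
      rewrite Rmax_right in Hz by lra. lra.
      intros z Hz. apply Pt0. lra. }
    assert (He : 0 < e <= 1).
    { split. apply exp_pos. unfold e. rewrite <- exp_0.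
      destruct (Req_dec (p x) 0) as [Z|Z]. rewrite Z, Ropp_0. lra.
      left. apply exp_increasing. lra. }
    assert (HEw : Cmod (E x * w x) <= M).
    { unfold E, IA, At. rewrite IA_eq by lra. apply HM. lra. }
    assert (HKx : K x = Cmod (E x * g x)).
    { unfold K, gt. rewrite Em. reflexivity. }
    set (U := Cmod u).
    assert (HU : 0 <= U) by apply Cmod_ge_0.
    assert (H1 : - fst (u * (E x * w x))%C <= U * M).
    { eapply Rle_trans. apply nfst_le_Cmod. rewrite Cmod_mult.
      apply Rmult_le_compat_l; auto. }
    assert (H2 : fst (u * (E x * g x))%C <= U * K x).
    { eapply Rle_trans. apply fst_le_Cmod. rewrite Cmod_mult, HKx. apply Rle_refl. }
    assert (HK0 : 0 <= K x) by apply Cmod_ge_0.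
    set (a1 := fst (u * (E x * w x))%C) in *.
    set (a2 := fst (u * (E x * g x))%C) in *.
    assert (H3 : q x * (- a1) <= P x * (U * M)).
    { assert (0 <= U * M) by (apply Rmult_le_pos; auto).
      destruct (Rle_dec 0 (- a1)).
      - apply Rmult_le_compat; lra.
      - apply Rle_trans with 0. nra. apply Rmult_le_pos; lra. }
    assert (H4 : e * a2 <= U * K x).
    { destruct (Rle_dec 0 a2). 
      - apply Rle_trans with (1 * a2). apply Rmult_le_compat_r; lra. lra.
      - apply Rle_trans with 0. assert (0 < e) by lra. nra. apply Rmult_le_pos; auto. }
    assert (H5 : e * (q x * (- a1)) <= e * (P x * (U * M))).
    { apply Rmult_le_compat_l; lra. }
    nra. }
  destruct (MVT_gen psi t0 t (fun x => Rmin (Derive psi x) 0)) as [c [Hc Heq]].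
  { intros x Hx. rewrite Rmin_left, Rmax_right in Hx by lra.
    destruct (dpsi x Hx) as [D [HD HD0]]. rewrite (is_derive_unique psi x D HD).
    rewrite Rmin_left by lra. exact HD. }
  { intros x Hx. apply cpsi. rewrite Rmax_right in Hx by lra. lra. }
  assert (Hle : psi t - psi t0 <= 0).
  { rewrite Heq. assert (Rmin (Derive psi c) 0 <= 0) by apply Rmin_r. nra. }
  assert (pt : p t = 0) by (unfold p; rewrite RInt_point; reflexivity).
  assert (IAt : IA t = RtoC 0) by (unfold IA, CRInt; rewrite RInt_point; reflexivity).
  assert (ht : h t = y t).
  { unfold h, E, yt. rewrite IAt, pt, Rmax_left by lra.
    unfold cexp, Copp, RtoC; simpl. rewrite Ropp_0, exp_0, cos_0, sin_0.
    destruct (y t) as [a b]. unfold Cmult; simpl. f_equal; ring. }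
  assert (h0 : h t0 = RtoC 0).
  { unfold h, yt. rewrite Rmax_left by lra. rewrite Hy0.
    destruct (E t0) as [a b]. unfold Cmult, RtoC; simpl. f_equal; ring. }
  assert (Gt : G t = M + RInt K t0 t) by (unfold G; rewrite pt, Ropp_0, exp_0; ring).
  assert (G0 : G t0 = M * exp (- p t0)).
  { unfold G. rewrite (RInt_point (V:=R_CompleteNormedModule)). simpl. unfold zero; simpl. ring. }
  assert (HRK : 0 <= RInt K t0 t).
  { apply RInt_ge_0. lra.
    apply (ex_RInt_continuous (V:=R_CompleteNormedModule)). intros z Hz. apply cK.
    rewrite Rmax_right in Hz by lra. lra.
    intros z Hz. apply Cmod_ge_0. }
  assert (HY : fst (u * y t)%C = Cmod (y t) ^ 2).
  { rewrite Cmod2_alt. unfold u. destruct (y t) as [a b]. unfold Cmult, Cconj, Re, Im; simpl. ring. }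
  assert (HU : Cmod u = Cmod (y t)) by (unfold u; apply Cmod_conj).
  unfold psi in Hle. rewrite ht, h0, Gt, G0, HY, HU in Hle.
  replace (fst (u * RtoC 0)%C) with 0 in Hle by (destruct u; unfold Cmult, RtoC; simpl; ring).
  assert (HKeq : RInt K t0 t = RInt (fun tau : R => Cmod (cexp (- CRInt A tau t) * g tau)) t0 t).
  { apply (RInt_ext (V:=R_CompleteNormedModule)). intros z Hz.
    rewrite Rmin_left, Rmax_right in Hz by lra.
    unfold K, E, IA, gt, At. rewrite IA_eq by lra. rewrite Rmax_left by lra. reflexivity. }
  rewrite <- HKeq.
  assert (0 < exp (- p t0)) by apply exp_pos.
  assert (0 <= Cmod (y t)) by apply Cmod_ge_0.
  assert (0 <= Cmod (y t) * M * exp (- p t0)).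
  { apply Rmult_le_pos; [apply Rmult_le_pos|]; lra. }
  destruct (Req_dec (Cmod (y t)) 0) as [Z|Z]. rewrite Z. lra.
  nra.
Qed.

Theorem lemma2p2
  (t0 t1 : R) (a11 a12 a21 a22 c12 c21 : R -> C) (c11 c22 b1 b2 : R -> R)
  (d1 d2 : R -> C) (z11 z22 z11' z22' : R -> R) (y v y' v' : R -> C) :
  (t0 < t1)%R ->
  cont_on (V := C_R_NormedModule) a11 t0 t1 -> cont_on (V := C_R_NormedModule) a12 t0 t1 ->
  cont_on (V := C_R_NormedModule) a21 t0 t1 -> cont_on (V := C_R_NormedModule) a22 t0 t1 ->
  cont_on (V := R_NormedModule) c11 t0 t1 -> cont_on (V := R_NormedModule) c22 t0 t1 ->
  cont_on (V := C_R_NormedModule) c12 t0 t1 -> cont_on (V := C_R_NormedModule) c21 t0 t1 ->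
  (forall t, (t0 <= t < t1)%R -> c21 t = Cconj (c12 t)) ->
  cont_on (V := R_NormedModule) b1 t0 t1 -> cont_on (V := R_NormedModule) b2 t0 t1 ->
  (forall t, (t0 <= t < t1)%R -> (0 < b1 t)%R /\ (0 < b2 t)%R) ->
  C1_on (V := C_R_NormedModule) (fun t => (a12 t / RtoC (b1 t))%C) d1 t0 t1 ->
  C1_on (V := C_R_NormedModule) (fun t => (Cconj (a21 t) / RtoC (b2 t))%C) d2 t0 t1 ->
  C1_on (V := R_NormedModule) z11 z11' t0 t1 -> C1_on (V := R_NormedModule) z22 z22' t0 t1 ->
  C1_on (V := C_R_NormedModule) y y' t0 t1 -> C1_on (V := C_R_NormedModule) v v' t0 t1 ->
  (forall t, (t0 <= t < t1)%R ->
     (z11' t + b1 t * (z11 t) ^ 2 + 2 * Re (a11 t) * z11 t + b2 t * (Cmod (y t)) ^ 2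
       - (Cmod (a21 t)) ^ 2 / b2 t - c11 t = 0)%R) ->
  (forall t, (t0 <= t < t1)%R ->
     (y' t + (RtoC (b1 t * z11 t + b2 t * z22 t) + Cconj (a11 t) + a22 t) * y t
       + (a12 t - RtoC (b1 t / b2 t) * Cconj (a21 t)) * RtoC (z11 t)
       - d2 t - Cconj (a21 t) / RtoC (b2 t) * (Cconj (a11 t) + a22 t) - c12 t = 0)%C) ->
  (forall t, (t0 <= t < t1)%R ->
     (z22' t + b2 t * (z22 t) ^ 2 + 2 * Re (a22 t) * z22 t + b1 t * (Cmod (v t)) ^ 2
       - (Cmod (a12 t)) ^ 2 / b1 t - c22 t = 0)%R) ->
  (forall t, (t0 <= t < t1)%R ->
     (v' t + (RtoC (b1 t * z11 t + b2 t * z22 t) + Cconj (a11 t) + a22 t) * v t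
       + (Cconj (a21 t) - RtoC (b2 t / b1 t) * a12 t) * RtoC (z22 t)
       - d1 t - a12 t / RtoC (b1 t) * (Cconj (a11 t) + a22 t) - c12 t = 0)%C) ->
  (forall t, (t0 <= t < t1)%R -> (0 <= z11 t)%R /\ (0 <= z22 t)%R) ->
  y t0 = RtoC 0 -> v t0 = RtoC 0 ->
  forall t M, (t0 <= t < t1)%R ->
    is_max_on (fun tau => Cmod (cexp (- CRInt (fun s => (Cconj (a11 s) + a22 s)%C) tau t)
                 * (a12 tau / RtoC (b1 tau) - Cconj (a21 tau) / RtoC (b2 tau)))%C) t0 t M ->
    (Cmod (y t) <= M + RInt (fun tau =>
        Cmod (cexp (- CRInt (fun s => (Cconj (a11 s) + a22 s)%C) tau t)
          * (d2 tau + Cconj (a21 tau) / RtoC (b2 tau) * (Cconj (a11 tau) + a22 tau)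
             + c12 tau))%C) t0 t)%R /\
    (Cmod (v t) <= M + RInt (fun tau =>
        Cmod (cexp (- CRInt (fun s => (Cconj (a11 s) + a22 s)%C) tau t)
          * (d1 tau + a12 tau / RtoC (b1 tau) * (Cconj (a11 tau) + a22 tau)
             + c12 tau))%C) t0 t)%R.
Proof.
  intros H01 ca11 ca12 ca21 ca22 cc11 cc22 cc12 cc21 Hc21 cb1 cb2 Hb Hd1 Hd2 Hz11 Hz22 Hy Hv
    Ez11 Ey Ez22 Ev Hz0 Hy0 Hv0 t M Ht [[tau [Htau Htau']] Hmax].
  destruct Hz11 as [cz11 _]. destruct Hz22 as [cz22 _].
  destruct Hd1 as [_ [_ cd1]]. destruct Hd2 as [_ [_ cd2]].
  destruct Hy as [cy [dy _]]. destruct Hv as [cv [dv _]].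
  assert (HM0 : (0 <= M)%R) by (rewrite <- Htau'; apply Cmod_ge_0).
  assert (cA : cont_on (V:=C_R_NormedModule) (fun s => (Cconj (a11 s) + a22 s)%C) t0 t1).
  { intros s Hs. apply flimC_plus. apply flimC_conj. apply ca11; auto. apply ca22; auto. }
  assert (cP : cont_on (V:=R_NormedModule) (fun s => b1 s * z11 s + b2 s * z22 s)%R t0 t1).
  { intros s Hs. apply flimR_plus; apply flimR_mult;
    first [apply cb1 | apply cb2 | apply cz11 | apply cz22]; auto. }
  assert (Hbn1 : forall s, (t0 <= s < t1)%R -> RtoC (b1 s) <> RtoC 0).
  { intros s Hs E. injection E. specialize (Hb s Hs). lra. }
  assert (Hbn2 : forall s, (t0 <= s < t1)%R -> RtoC (b2 s) <> RtoC 0).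
  { intros s Hs E. injection E. specialize (Hb s Hs). lra. }
  split.
  - apply (core t0 t1 t M (fun s => (Cconj (a11 s) + a22 s)%C) (fun s => b1 s * z11 s + b2 s * z22 s)%R
      (fun s => b1 s * z11 s)%R (fun s => (a12 s / RtoC (b1 s) - Cconj (a21 s) / RtoC (b2 s))%C)
      (fun s => (d2 s + Cconj (a21 s) / RtoC (b2 s) * (Cconj (a11 s) + a22 s) + c12 s)%C) y y');
      auto; try lra.
    + intros s Hs. apply flimC_plus. apply flimC_plus. apply cd2; auto.
      apply flimC_mult. apply flimC_divR. specialize (Hb s Hs); lra.
      apply flimC_conj, ca21; auto. apply cb2; auto. apply cA; auto. apply cc12; auto.
    + intros s Hs. specialize (Hb s Hs). specialize (Hz0 s Hs).
      split; apply Rmult_le_pos || idtac; try lra. nra.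
    + intros s Hs. specialize (Ey s Hs). specialize (Hbn1 s Hs). specialize (Hbn2 s Hs).
      rewrite RtoC_div in Ey by (specialize (Hb s Hs); lra).
      rewrite RtoC_plus, !RtoC_mult in Ey. rewrite RtoC_plus, !RtoC_mult.
      match type of Ey with ?E0 = _ => 
        transitivity ((- (RtoC (b1 s) * RtoC (z11 s)) * (a12 s / RtoC (b1 s) - Cconj (a21 s) / RtoC (b2 s))
          + (d2 s + Cconj (a21 s) / RtoC (b2 s) * (Cconj (a11 s) + a22 s) + c12 s)) + E0)%C end.
      field; auto.
      rewrite Ey. ring.
  - apply (core t0 t1 t M (fun s => (Cconj (a11 s) + a22 s)%C) (fun s => b1 s * z11 s + b2 s * z22 s)%R
      (fun s => b2 s * z22 s)%R (fun s => (Cconj (a21 s) / RtoC (b2 s) - a12 s / RtoC (b1 s))%C)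
      (fun s => (d1 s + a12 s / RtoC (b1 s) * (Cconj (a11 s) + a22 s) + c12 s)%C) v v');
      auto; try lra.
    + intros s Hs. apply flimC_plus. apply flimC_plus. apply cd1; auto.
      apply flimC_mult. apply flimC_divR. specialize (Hb s Hs); lra.
      apply ca12; auto. apply cb1; auto. apply cA; auto. apply cc12; auto.
    + intros s Hs. specialize (Hb s Hs). specialize (Hz0 s Hs).
      split; apply Rmult_le_pos || idtac; try lra. nra.
    + intros s Hs. specialize (Ev s Hs). specialize (Hbn1 s Hs). specialize (Hbn2 s Hs).
      rewrite RtoC_div in Ev by (specialize (Hb s Hs); lra).
      rewrite RtoC_plus, !RtoC_mult in Ev. rewrite RtoC_plus, !RtoC_mult.
      match type of Ev with ?E0 = _ => 
        transitivity ((- (RtoC (b2 s) * RtoC (z22 s)) * (Cconj (a21 s) / RtoC (b2 s) - a12 s / RtoC (b1 s))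
          + (d1 s + a12 s / RtoC (b1 s) * (Cconj (a11 s) + a22 s) + c12 s)) + E0)%C end.
      field; auto.
      rewrite Ev. ring.
    + intros s Hs.
      match goal with |- Cmod (?X * _)%C <= _ =>
        replace (X * (Cconj (a21 s) / RtoC (b2 s) - a12 s / RtoC (b1 s)))%C
          with (- (X * (a12 s / RtoC (b1 s) - Cconj (a21 s) / RtoC (b2 s))))%C by ring end.
      rewrite Cmod_opp. apply Hmax. auto.
Qed.
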